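(* Let $n\ge2$, let $L_1,\dots,L_n$ be finite lists of reals, each sorted in nondecreasing order, and fix $0\le\tau_{min}\le\tau_{max}$ and $\delta\ge0$. If at least one valid tuple exists, then Algorithm-Chain (for the chain or ordered-sibling constraints) and Algorithm-Sibling (for the unordered-sibling constraints) find a valid tuple.
   Context: A tuple is a choice of indices $(p_1,\dots,p_n)$, with $p_i$ an index into $L_i$; its values are $x_i=L_i[p_i]$. The three constraint types are: - Chain: $x_{i+1}-x_i\in[\tau_{min},\tau_{max}]$ for $i=1,\dots,n-1$. - Ordered sibling: $x_{i+1}-x_i\in[-\delta,\delta]$ for $i=1,\dots,n-1$. - Unordered sibling: $|x_i-x_j|\le(n-1)\delta$ for all $i\ne j$. A tuple satisfying the constraints in force is called valid. Both algorithms keep a pointer into each list, initially at the first entry, and search for a valid tuple among the entries at or after the pointers. Algorithm-Chain searches as follows. While the current entries are not valid, take the smallest $i$ such that $(x_i,x_{i+1})$ violates $x_{i+1}-x_i\in[a,b]$, where $[a,b]=[\tau_{min},\tau_{max}]$ for chains and $[a,b]=[-\delta,\delta]$ for ordered siblings. If $x_{i+1}-x_i>b$, advance the pointer of $L_i$; if $x_{i+1}-x_i<a$, advance the pointer of $L_{i+1}$. The search stops when the current entries are valid or a pointer runs past the end of its list. Algorithm-Sibling searches under the unordered-sibling constraints. It repeatedly advances the pointer of a list whose current entry is too small to belong to any valid tuple whose other entries lie at or after the current pointers, and stops at a valid tuple or when a list is exhausted. *)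

(* Defs.v *)
From HB Require Import structures.
From mathcomp Require Import all_boot all_order all_algebra.
Set Implicit Arguments. Unset Strict Implicit. Unset Printing Implicit Defensive.
Import Order.TTheory GRing.Theory Num.Theory.
Local Open Scope ring_scope.

(* The lists L_1..L_n are the entries (0-based) of L : seq (seq R), n = size L.
   A pointer vector / tuple of indices is p : nat -> nat (only p 0 .. p (n-1)
   matter); the value x_i is the p i-th entry of the i-th list. *)
Section Defs.
Variable R : realFieldType.

Definition entry (L : seq (seq R)) (p : nat -> nat) (i : nat) : R :=
  nth 0 (nth [::] L i) (p i).

Definition in_bounds (L : seq (seq R)) (p : nat -> nat) : bool :=
  [forall i : 'I_(size L), (p i < size (nth [::] L i))%N].

Definition consec_ok (a b : R) (L : seq (seq R)) (p : nat -> nat) : bool :=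
  [forall i : 'I_(size L).-1, a <= entry L p i.+1 - entry L p i <= b].

Definition pair_valid (a b : R) L p : bool := in_bounds L p && consec_ok a b L p.

Definition chain_valid (tmin tmax : R) L p : bool := pair_valid tmin tmax L p.
Definition osib_valid (delta : R) L p : bool := pair_valid (- delta) delta L p.
Definition usib_valid (delta : R) (L : seq (seq R)) (p : nat -> nat) : bool :=
  in_bounds L p &&
  [forall i : 'I_(size L), forall j : 'I_(size L),
     (i != j) ==> (`|entry L p i - entry L p j| <= ((size L).-1)%:R * delta)].

Definition start : nat -> nat := fun _ => 0%N.

Definition advance (p : nat -> nat) (i : nat) : nat -> nat :=
  fun k => if k == i then (p k).+1 else p k.

(* one step of Algorithm-Chain with window [a,b] (used when the current
   entries are in bounds and not valid) *)
Definition chain_step (a b : R) (L : seq (seq R)) (p : nat -> nat) : nat -> nat :=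
  let i := find (fun i => ~~ (a <= entry L p i.+1 - entry L p i <= b))
                (iota 0 (size L).-1) in
  if b < entry L p i.+1 - entry L p i then advance p i else advance p i.+1.

Definition chain_finds (a b : R) (L : seq (seq R)) : Prop :=
  exists k : nat,
    (forall j : nat, (j < k)%N ->
       in_bounds L (iter j (chain_step a b L) start) /\
       ~~ pair_valid a b L (iter j (chain_step a b L) start)) /\
    pair_valid a b L (iter k (chain_step a b L) start).

Definition sib_discardable (delta : R) (L : seq (seq R)) (p : nat -> nat)
    (i : nat) : Prop :=
  (i < size L)%N /\
  ~ (exists q : nat -> nat, usib_valid delta L q /\
        (forall k, (k < size L)%N -> (p k <= q k)%N) /\ q i = p i).

Definition sel_ok (delta : R) (L : seq (seq R)) (sel : (nat -> nat) -> nat) : Prop :=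
  forall p, (exists i, sib_discardable delta L p i) ->
            sib_discardable delta L p (sel p).

Definition sib_step (sel : (nat -> nat) -> nat) (p : nat -> nat) : nat -> nat :=
  advance p (sel p).

Definition sib_finds (delta : R) (L : seq (seq R)) (sel : (nat -> nat) -> nat) : Prop :=
  exists k : nat,
    (forall j : nat, (j < k)%N ->
       in_bounds L (iter j (sib_step sel) start) /\
       ~~ usib_valid delta L (iter j (sib_step sel) start)) /\
    usib_valid delta L (iter k (sib_step sel) start).

End Defs.

(* Main.v *)
Require Import Defs.
From HB Require Import structures.
From mathcomp Require Import all_boot all_order all_algebra.
From mathcomp Require Import zify ring lra.
Import Order.TTheory GRing.Theory Num.Theory.
Local Open Scope ring_scope.
Set Implicit Arguments. Unset Strict Implicit.

Lemma run_ok (T : Type) (f : T -> T) (V : T -> bool) (I : T -> Prop) (mu : T -> nat) s :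
  I s -> (forall p, I p -> ~~ V p -> I (f p) /\ (mu (f p) < mu p)%N) ->
  exists k, (forall j, (j < k)%N -> I (iter j f s) /\ ~~ V (iter j f s)) /\ V (iter k f s).
Proof.
move=> Is H.
have: forall N s', (mu s' < N)%N -> I s' ->
  exists k, (forall j, (j < k)%N -> I (iter j f s') /\ ~~ V (iter j f s')) /\ V (iter k f s').
  elim=> [//|N IH] s' Hmu Is'.
  case Vs: (V s').
    by exists 0%N; split=> // j.
  have [If Hlt] := H s' Is' (negbT Vs).
  have [k [Hk Vk]] := IH (f s') (leq_trans Hlt Hmu) If.
  exists k.+1; split; last by rewrite iterSr.
  move=> [|j] Hj /=; first by rewrite Vs.
  by rewrite -iterS iterSr; apply: Hk.
by move/(_ (mu s).+1 s (ltnSn _) Is).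
Qed.

Lemma sum_adv n (q p : nat -> nat) i : (i < n)%N -> (p i < q i)%N ->
  (\sum_(k < n) (q k - advance p i k) < \sum_(k < n) (q k - p k))%N.
Proof.
move=> Hi Hpq.
rewrite (bigD1 (Ordinal Hi)) //= [X in (_ < X)%N](bigD1 (Ordinal Hi)) //=.
rewrite /advance eqxx.
rewrite (eq_bigr (fun k : 'I_n => q k - p k)%N); last first.
  move=> k Hk; rewrite /advance.
  have -> : (nat_of_ord k == i) = false; last by [].
  apply/negbTE; apply: contra Hk => /eqP Hk; apply/eqP; exact: val_inj.
rewrite ltn_add2r; lia.
Qed.

Section Main.
Variable R : realFieldType.
Variable L : seq (seq R).
Hypothesis HL : all (sorted <=%R) L.

Lemma entry_mono (p q : nat -> nat) k : (k < size L)%N -> (p k <= q k)%N ->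
  (q k < size (nth [::] L k))%N -> entry L p k <= entry L q k.
Proof.
move=> Hk Hpq Hq; rewrite /entry.
have Hs : sorted <=%R (nth [::] L k) by apply: (allP HL); exact: mem_nth.
apply: (sorted_leq_nth le_trans lexx) => //.
  rewrite inE; exact: leq_ltn_trans Hq.
Qed.

Definition Inv (q : nat -> nat) (p : nat -> nat) :=
  forall k, (k < size L)%N -> (p k <= q k)%N.

Lemma Inv_bounds q p : in_bounds L q -> Inv q p -> in_bounds L p.
Proof.
move=> /forallP Hq Hp; apply/forallP=> i.
exact: leq_ltn_trans (Hp _ (ltn_ord i)) (Hq i).
Qed.

Lemma Inv_adv q p i : (i < size L)%N -> (p i < q i)%N -> Inv q p -> Inv q (advance p i).
Proof.
move=> Hi Hpq Hp k Hk; rewrite /advance; case: eqP => [->|_] //; exact: Hp.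
Qed.

Lemma entry_eq (p q : nat -> nat) k : p k = q k -> entry L p k = entry L q k.
Proof. by rewrite /entry => ->. Qed.

Lemma chain_ok a b : (exists p, pair_valid a b L p) -> chain_finds a b L.
Proof.
move=> [q /andP[Bq Cq]].
have Hbq := Bq; move/forallP: Bq => Bq'.
have step : forall p, Inv q p -> ~~ (pair_valid a b L) p -> Inv q ((chain_step a b L) p) /\ ((\sum_(k < size L) (q k - ((chain_step a b L) p) k)) < (\sum_(k < size L) (q k - p k)))%N.
  move=> p Ip Vp.
  have Bp := Inv_bounds Hbq Ip.
  move: Vp; rewrite /pair_valid Bp /= => /forallPn [i0 Hi0].
  set P := (fun i => ~~ (a <= entry L p i.+1 - entry L p i <= b)).
  have hasP : has P (iota 0 (size L).-1).
    apply/hasP; exists (nat_of_ord i0) => //; rewrite mem_iota /=; exact: ltn_ord.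
  have Hfs := hasP; rewrite has_find size_iota in Hfs.
  have Pf := nth_find 0%N hasP; rewrite nth_iota // add0n in Pf.
  rewrite /chain_step -/P.
  set i := find P _ in Hfs Pf *.
  have Hi1 : (i.+1 < size L)%N by move: Hfs; case: (size L) => //=.
  have Hi : (i < size L)%N by apply: ltnW.
  have Cqi := forallP Cq (Ordinal Hfs); rewrite /= in Cqi.
  have m1 := entry_mono Hi (Ip _ Hi) (Bq' (Ordinal Hi)).
  have m2 := entry_mono Hi1 (Ip _ Hi1) (Bq' (Ordinal Hi1)).
  move: Pf; rewrite /P negb_and -!ltNge.
  case: ifP => Hb Pf.
  + have Hlt : (p i < q i)%N.
      rewrite ltn_neqAle Ip // andbT; apply/eqP => E.
      have := entry_eq E => E'.
      move/andP: Cqi => [_ C2]; move: Hb; rewrite E'; lra.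
    split; [exact: Inv_adv|exact: sum_adv].
  + have Hlt : (p i.+1 < q i.+1)%N.
      rewrite ltn_neqAle Ip // andbT; apply/eqP => E.
      have := entry_eq E => E'.
      move/andP: Cqi => [C1 _]; move: Pf Hb; rewrite E'; move=> [] H1 H2; lra.
    split; [exact: Inv_adv|exact: sum_adv].
have [k [Hk Vk]] := @run_ok _ (chain_step a b L) (pair_valid a b L) (Inv q)
  (fun p => \sum_(k < size L) (q k - p k))%N start (fun k _ => leq0n _) step.
exists k; split => // j /Hk [Ij Vj]; split => //; exact: Inv_bounds Hbq Ij.
Qed.

Lemma sib_ok delta : (exists p, usib_valid delta L p) ->
  forall sel, sel_ok delta L sel -> sib_finds delta L sel.
Proof.
move=> [q /andP[Bq Cq]] sel Hsel.
have Hbq := Bq; move/forallP: Bq => Bq'.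
set D := ((size L).-1)%:R * delta.
have key : forall p (i j : 'I_(size L)), i != j -> in_bounds L p ->
    D < entry L p j - entry L p i -> sib_discardable delta L p i.
  move=> p i j ij Bp Hd; split; first exact: ltn_ord.
  move=> [q' [/andP[Bq'' Cq''] [Hge Heq]]].
  have E := entry_eq Heq.
  have m := entry_mono (ltn_ord j) (Hge _ (ltn_ord j)) (forallP Bq'' j).
  have := forallP (forallP Cq'' i) j; rewrite ij /= => Hn.
  have := ler_norm (entry L q' j - entry L q' i); rewrite distrC => Hn2.
  move: Hd; rewrite -/D in Hn; lra.
have step : forall p, Inv q p -> ~~ (usib_valid delta L) p -> Inv q ((sib_step sel) p) /\ ((\sum_(k < size L) (q k - ((sib_step sel) p) k)) < (\sum_(k < size L) (q k - p k)))%N.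
  move=> p Ip Vp.
  have Bp := Inv_bounds Hbq Ip.
  have [dsc1 dsc2] : sib_discardable delta L p (sel p).
    apply: Hsel.
    move: Vp; rewrite /usib_valid Bp /= => /forallPn [i] /forallPn [j].
    rewrite negb_imply -ltNge => /andP[ij Hd].
    case: (lerP (entry L p i) (entry L p j)) => Hij.
      exists (nat_of_ord i); apply: (key p i j ij Bp).
      by move: Hd; rewrite distrC ger0_norm // subr_ge0.
    exists (nat_of_ord j); apply: (key p j i _ Bp).
      by rewrite eq_sym.
    by move: Hd; rewrite ger0_norm // subr_ge0 ltW.
  have Hlt : (p (sel p) < q (sel p))%N.
    rewrite ltn_neqAle Ip // andbT; apply/eqP => E.
    apply: dsc2; exists q; split; first by rewrite /usib_valid Hbq Cq.
    by split.
  split; [exact: Inv_adv|exact: sum_adv].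
have [k [Hk Vk]] := @run_ok _ (sib_step sel) (usib_valid delta L) (Inv q)
  (fun p => \sum_(k < size L) (q k - p k))%N start (fun k _ => leq0n _) step.
exists k; split => // j /Hk [Ij Vj]; split => //; exact: Inv_bounds Hbq Ij.
Qed.

End Main.

Theorem mainTheorem2 (R : realFieldType) (L : seq (seq R)) (tmin tmax delta : R) :
  (2 <= size L)%N ->
  all (sorted <=%R) L ->
  0 <= tmin -> tmin <= tmax -> 0 <= delta ->
  ((exists p, chain_valid tmin tmax L p) -> chain_finds tmin tmax L) /\
  ((exists p, osib_valid delta L p) -> chain_finds (- delta) delta L) /\
  ((exists p, usib_valid delta L p) ->
     forall sel : (nat -> nat) -> nat, sel_ok delta L sel -> sib_finds delta L sel).
Proof.
move=> _ HL _ _ _; split; [|split].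
- exact: chain_ok.
- exact: chain_ok.
- exact: sib_ok.
Qed.
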